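(* Let $F(q,x)=\sum_{n\ge0}\sum_{\gamma\in\mathcal{D}_n} q^{\#duu(\gamma)}x^n$ and $V(q,x)=\sum_{n\ge0}\sum_{\gamma\in\mathcal{D}_n} q^{\#du(\gamma)}x^n$, where $\#w(\gamma)$ is the number of occurrences of the factor $w$ in $\gamma$ (so $\#du(\gamma)$ is the number of valleys). Let $SC_2(x)=\sum_{n\ge0} sc_2(\mathcal{D}_n)x^n$, where $sc_2(\mathcal{D}_n)$ is the number of saturated chains of length 2 in $\mathcal{D}_n$. Then $$ SC_2(x)=2\left[\frac{\partial F}{\partial q}\right]_{q=1}+\left[\frac{\partial^2 V}{\partial q^2}\right]_{q=1}. $$
   Context: A Dyck path of semilength $n$ is a lattice path from $(0,0)$ to $(2n,0)$ with steps $u=(1,1)$ and $d=(1,-1)$ never going below the $x$-axis, identified with a word over $\{u,d\}$. $\mathcal{D}_n$ is the set of Dyck paths of semilength $n$ ordered by containment: $\gamma\le\gamma'$ iff $\gamma$ lies weakly below $\gamma'$. A saturated chain of length $h$ is a sequence $\gamma^{(0)}<\cdots<\gamma^{(h)}$ in which each element covers the previous one. *)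

(* Defs.v *)
From HB Require Import structures.
From mathcomp Require Import all_boot all_order all_algebra.
Set Implicit Arguments. Unset Strict Implicit. Unset Printing Implicit Defensive.
Import Order.TTheory GRing.Theory Num.Theory.
Local Open Scope ring_scope.

(* Words over {u,d}: u = true, d = false. *)
Definition step (b : bool) : int := if b then 1 else -1.

Definition height (s : seq bool) : int := \sum_(b <- s) step b.

Definition isDyck (s : seq bool) : bool :=
  [forall i : 'I_(size s).+1, 0 <= height (take i s)] && (height s == 0).

Definition Dyck (n : nat) : {set (n.*2).-tuple bool} :=
  [set g : (n.*2).-tuple bool | isDyck (tval g)].

Definition dle n (g g' : (n.*2).-tuple bool) : bool :=
  [forall i : 'I_(n.*2).+1, height (take i g) <= height (take i g')].

Definition dlt n (g g' : (n.*2).-tuple bool) : bool := dle g g' && (g != g').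

Definition covers n (g g' : (n.*2).-tuple bool) : bool :=
  [&& g \in Dyck n, g' \in Dyck n, dlt g g' &
      [forall h in Dyck n, ~~ (dlt g h && dlt h g')]].

Definition sc2 (n : nat) : nat :=
  #|[set c : (n.*2).-tuple bool * (n.*2).-tuple bool * (n.*2).-tuple bool |
       covers c.1.1 c.1.2 && covers c.1.2 c.2]|.

Definition occ (w s : seq bool) : nat :=
  \sum_(i < size s) (take (size w) (drop i s) == w).

Definition duu : seq bool := [:: false; true; true].
Definition du : seq bool := [:: false; true].

(* coefficient of x^n in F(q,x), resp. V(q,x), as a polynomial in q *)
Definition Fcoef (n : nat) : {poly int} := \sum_(g in Dyck n) 'X^(occ duu (tval g)).
Definition Vcoef (n : nat) : {poly int} := \sum_(g in Dyck n) 'X^(occ du (tval g)).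

(* Main.v *)
Require Import Defs.
From mathcomp Require Import all_boot all_order all_algebra zify.
Set Implicit Arguments. Unset Strict Implicit. Unset Printing Implicit Defensive.
Import Order.TTheory GRing.Theory Num.Theory.
Local Open Scope ring_scope.

Definition cd (s : seq bool) (k : nat) : nat := count negb (take k s).

Lemma height_count t : height t = (size t)%:Z - 2 * (count negb t)%:Z.
Proof.
elim: t => [|b t IH]; first by rewrite /height big_nil.
rewrite /height big_cons -/(height t) IH /=; case: b => /=; lia.
Qed.

Lemma dle_cd n (g g' : (n.*2).-tuple bool) :
  dle g g' = [forall i : 'I_(n.*2).+1, (cd g' i <= cd g i)%N].
Proof.
apply: eq_forallb => i; rewrite !height_count !size_take !size_tuple /cd.
apply/idP/idP; lia.
Qed.

Lemma isDyck_cd (s : seq bool) :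
  isDyck s = [forall i : 'I_(size s).+1, (2 * cd s i <= i)%N] && (2 * count negb s == size s)%N.
Proof.
rewrite /isDyck; congr andb.
  apply: eq_forallb => i; rewrite height_count size_take /cd.
  have := ltn_ord i; case: (ltnP i (size s)) => H1 H2; apply/idP/idP; try lia.
rewrite height_count; apply/eqP/eqP; lia.
Qed.
Lemma cd0 s : cd s 0 = 0%N.
Proof. by rewrite /cd take0. Qed.

Lemma cdS s k : (k < size s)%N -> cd s k.+1 = (cd s k + ~~ nth true s k)%N.
Proof. by move=> H; rewrite /cd (take_nth true H) -cats1 count_cat /= addn0. Qed.

Lemma cd_size s : cd s (size s) = count negb s.
Proof. by rewrite /cd take_size. Qed.

Lemma eq_cd (s t : seq bool) : size s = size t ->
  (forall k, (k <= size s)%N -> cd s k = cd t k) -> s = t.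
Proof.
move=> Hs E; apply: (eq_from_nth (x0:=true)) => // j Hj.
have Hj' : (j < size t)%N by rewrite -Hs.
move: (E j (ltnW Hj)) (E j.+1 Hj); rewrite !cdS //.
by case: (nth true s j); case: (nth true t j) => /=; lia.
Qed.

Definition flips (s : seq bool) (i : nat) : seq bool :=
  mkseq (fun j => if j == i then true else if j == i.+1 then false else nth true s j) (size s).

Lemma size_flips s i : size (flips s i) = size s.
Proof. by rewrite size_mkseq. Qed.

Lemma nth_flips s i j : (j < size s)%N ->
  nth true (flips s i) j = if j == i then true else if j == i.+1 then false else nth true s j.
Proof. by move=> H; rewrite nth_mkseq. Qed.

Definition valley (s : seq bool) (i : nat) : bool := take 2 (drop i s) == du.

Lemma valleyE s i : valley s i = [&& i.+1 < size s, ~~ nth true s i & nth true s i.+1]%N.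
Proof.
rewrite /valley; case: (ltnP i.+1 (size s)) => H.
  rewrite (drop_nth true (ltnW H)) (drop_nth true H) /=.
  by rewrite take0; case: (nth true s i); case: (nth true s i.+1).
rewrite /=; apply/negbTE/eqP => E; have := congr1 size E; rewrite size_take size_drop /=.
case: ifP; lia.
Qed.

Lemma cd_flips s i k : valley s i -> (k <= size s)%N ->
  (cd (flips s i) k + (k == i.+1) = cd s k)%N.
Proof.
rewrite valleyE => /and3P [Hi Hn Hn1].
elim: k => [|k IH] Hk; first by rewrite !cd0.
have Hk' : (k < size s)%N by [].
rewrite cdS ?size_flips // cdS // nth_flips //.
move: (IH (ltnW Hk)).
case: (ltngtP k i) => [Hlt|Hgt|->].
- have E1 : (k == i.+1) = false by apply/negbTE/eqP; lia.
  have E2 : (k.+1 == i.+1) = false by apply/negbTE/eqP; lia.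
  rewrite E1 E2 /=; lia.
- have E2 : (k.+1 == i.+1) = false by apply/negbTE/eqP; lia.
  case: (eqVneq k i.+1) => [->|Hne].
    have E3 : (i.+2 == i.+1) = false by apply/negbTE/eqP; lia.
    rewrite ?eqxx E3 Hn1 /=; lia.
  rewrite ?(negbTE Hne) E2 /=; lia.
- have E3 : (i == i.+1) = false by apply/negbTE/eqP; lia.
  rewrite ?eqxx E3 (negbTE Hn) /=; lia.
Qed.

Definition valleys (s : seq bool) : nat := \sum_(i < size s) valley s i.

Lemma flipT_proof n (g : (n.*2).-tuple bool) i : size (flips g i) == n.*2.
Proof. by rewrite size_flips size_tuple. Qed.

Definition flipT n (g : (n.*2).-tuple bool) (i : nat) : (n.*2).-tuple bool :=
  Tuple (flipT_proof g i).

Lemma isDyckP s : reflect ((forall k, (k <= size s)%N -> (2 * cd s k <= k)%N) /\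
   (2 * cd s (size s) = size s)%N) (isDyck s).
Proof.
rewrite isDyck_cd cd_size; apply: (iffP andP) => [[/forallP H /eqP E]|[H E]]; split => //.
- move=> k Hk; have Hk' : (k < (size s).+1)%N by rewrite ltnS.
  exact: (H (Ordinal Hk')).
- apply/forallP => k; apply: H; by rewrite -ltnS.
- by apply/eqP.
Qed.

Section Tup.
Variable n : nat.
Implicit Types g h : (n.*2).-tuple bool.

Lemma dleP g g' : reflect (forall k, (k <= n.*2)%N -> (cd g' k <= cd g k)%N) (dle g g').
Proof.
rewrite dle_cd; apply: (iffP forallP) => H.
  move=> k Hk; have Hk' : (k < (n.*2).+1)%N by rewrite ltnS.
  exact: (H (Ordinal Hk')).
move=> k; apply: H; by rewrite -ltnS.
Qed.

Lemma DyckP g : reflect ((forall k, (k <= n.*2)%N -> (2 * cd g k <= k)%N) /\ cd g n.*2 = n)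
  (g \in Dyck n).
Proof.
rewrite inE; have := isDyckP g; rewrite size_tuple => P.
apply: (iffP P) => [[H E]|[H E]]; split => //; lia.
Qed.

Lemma tuple_eq_cd g h : (forall k, (k <= n.*2)%N -> cd g k = cd h k) -> g = h.
Proof. by move=> E; apply: val_inj; apply: eq_cd; rewrite ?size_tuple. Qed.

Lemma cd_flipT g i k : valley g i -> (k <= n.*2)%N ->
  (cd (flipT g i) k + (k == i.+1) = cd g k)%N.
Proof. by move=> V Hk; apply: cd_flips; rewrite ?size_tuple. Qed.

Lemma valley_lt g i : valley g i -> (i.+1 < n.*2)%N.
Proof. by rewrite valleyE size_tuple => /and3P[]. Qed.

Lemma cd_le_step (s : seq bool) k : (k < size s)%N -> (cd s k <= cd s k.+1 <= (cd s k).+1)%N.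
Proof. move=> H; rewrite cdS //; case: (nth true s k) => /=; lia. Qed.

Lemma flip_Dyck g i : g \in Dyck n -> valley g i -> flipT g i \in Dyck n.
Proof.
move=> /DyckP [H E] V; apply/DyckP; split.
  move=> k Hk; have := cd_flipT V Hk; have := H k Hk; lia.
have := cd_flipT V (leqnn _); have := valley_lt V.
have -> : (n.*2 == i.+1) = false by apply/negbTE/eqP; have := valley_lt V; lia.
lia.
Qed.

Lemma nth_flipT g i : valley g i -> nth true (flipT g i) i = true /\ nth true g i = false.
Proof.
move=> V; have := valley_lt V; move: V; rewrite valleyE => /and3P[_ Hn _] Hi.
split; last by apply/negbTE.
by rewrite /= nth_flips ?eqxx // size_tuple; lia.
Qed.

Lemma flip_neq g i : valley g i -> g != flipT g i.
Proof.
move=> V; apply/eqP => E; have [A B] := nth_flipT V.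
by move: A; rewrite -E B.
Qed.

Lemma dle_flip g i : valley g i -> dle g (flipT g i).
Proof. move=> V; apply/dleP => k Hk; have := cd_flipT V Hk; lia. Qed.

Lemma no_between g i h : valley g i -> dle g h -> dle h (flipT g i) ->
  h = g \/ h = flipT g i.
Proof.
move=> V /dleP L1 /dleP L2.
have Hi := valley_lt V.
case: (eqVneq (cd h i.+1) (cd g i.+1)) => Ei.
  left; apply: tuple_eq_cd => k Hk; case: (eqVneq k i.+1) => [->|Hne] //.
  have := cd_flipT V Hk; have := L1 k Hk; have := L2 k Hk; rewrite (negbTE Hne); lia.
right; apply: tuple_eq_cd => k Hk; have := cd_flipT V Hk; have := L1 k Hk; have := L2 k Hk.
case: (eqVneq k i.+1) => [->|Hne]; last lia.
move: Ei => /eqP Ei /=; lia.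
Qed.

Lemma covers_flip g i : g \in Dyck n -> valley g i -> covers g (flipT g i).
Proof.
move=> D V; apply/and4P; split => //; first exact: flip_Dyck.
  by rewrite /dlt dle_flip // flip_neq.
apply/forallP => h; apply/implyP => Dh; apply/negP => /andP[/andP[L1 N1] /andP[L2 N2]].
case: (no_between V L1 L2) => E.
  by move: N1; rewrite E eqxx.
by move: N2; rewrite E eqxx.
Qed.
End Tup.

Section Tup2.
Variable n : nat.
Implicit Types g h : (n.*2).-tuple bool.

Lemma covers_valley g g' : covers g g' -> exists2 i, valley g i & g' = flipT g i.
Proof.
case/and4P => Dg Dg' /andP[Hle0 Hne] Hnb.
have /DyckP [_ Eg] := Dg; have /DyckP [_ Eg'] := Dg'.
have /dleP Hle := Hle0.
pose P := fun k : 'I_(n.*2).+1 => (cd g' k < cd g k)%N.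
have [k0 Pk0] : exists k0, P k0.
  case: (boolP [exists k, P k]) => [/existsP //| /existsPn H].
  move: Hne => /eqP; case; apply: tuple_eq_cd => k Hk.
  have Hk' : (k < (n.*2).+1)%N by rewrite ltnS.
  have := H (Ordinal Hk'); have := Hle k Hk; rewrite /P /=; lia.
pose F := fun k : 'I_(n.*2).+1 => (2 * cd g k + (n.*2 - k))%N.
case: (arg_maxnP F Pk0) => k Pk Hmax.
rewrite /P in Pk.
have Hk := ltn_ord k.
have kpos : (0 < k)%N.
  by case: (posnP k) => // E; move: Pk; rewrite E !cd0.
have kN : (k < n.*2)%N.
  case: (ltnP k n.*2) => // H.
  have Ek : nat_of_ord k = n.*2 by lia.
  by move: Pk; rewrite Ek Eg Eg' ltnn.
have [i Hi] : exists i, nat_of_ord k = i.+1 by exists k.-1; lia.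
rewrite Hi in Pk.
have Sg : cd g i.+1 = (cd g i + ~~ nth true g i)%N by apply: cdS; rewrite size_tuple; clear -Hi kN; lia.
have Sg' : cd g' i.+1 = (cd g' i + ~~ nth true g' i)%N by apply: cdS; rewrite size_tuple; clear -Hi kN; lia.
have Tg : cd g i.+2 = (cd g i.+1 + ~~ nth true g i.+1)%N by apply: cdS; rewrite size_tuple; clear -Hi kN; lia.
have Tg' : cd g' i.+2 = (cd g' i.+1 + ~~ nth true g' i.+1)%N by apply: cdS; rewrite size_tuple; clear -Hi kN; lia.
have Hgi : nth true g i = false.
  apply/negbTE/negP => Ht; rewrite Ht /= in Sg.
  have Hi' : (i < (n.*2).+1)%N by clear -Hi Hk; lia.
  have Pj : P (Ordinal Hi').
    rewrite /P /=; move: Sg'; clear -Pk Sg; case: (nth true g' i) => /=; lia.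
  have := Hmax _ Pj; rewrite /F /= Hi; clear -Sg kN Hi; lia.
have Hgk : nth true g i.+1 = true.
  apply/negP => /negP Ht; rewrite (negbTE Ht) /= in Tg.
  have Hi' : (i.+2 < (n.*2).+1)%N by clear -Hi kN; lia.
  have Pj : P (Ordinal Hi').
    rewrite /P /=; move: Tg'; clear -Pk Tg; case: (nth true g' i.+1) => /=; lia.
  have := Hmax _ Pj; rewrite /F /= Hi; clear -Tg kN Hi; lia.
have V : valley g i.
  rewrite valleyE size_tuple; apply/and3P; split; [clear -Hi kN; lia | by rewrite Hgi | by rewrite Hgk].
have Hdle : dle (flipT g i) g'.
  apply/dleP => j Hj; have := cd_flipT V Hj.
  have := Hle j Hj; clear -Pk; case: (eqVneq j i.+1) => [->|Hne2] /=; lia.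
move/forallP: Hnb => /(_ (flipT g i)).
rewrite flip_Dyck //= /dlt dle_flip // flip_neq //= Hdle /= => /negPn/eqP E.
by exists i.
Qed.

Lemma coversE g g' : covers g g' =
  (g \in Dyck n) && [exists i : 'I_(n.*2), valley g i && (g' == flipT g i)].
Proof.
apply/idP/idP.
  move=> C; have := C; case/and4P => D _ _ _; rewrite D /=.
  case: (covers_valley C) => i V E.
  apply/existsP; exists (Ordinal (ltnW (valley_lt V))); by rewrite /= V E eqxx.
case/andP => D /existsP [i /andP[V /eqP ->]]; exact: covers_flip.
Qed.

End Tup2.

Lemma sum_pick N (c : nat) (f : nat -> bool) :
  (\sum_(j < N) ((nat_of_ord j == c) && f j) = ((c < N) && f c))%N.
Proof.
case: (ltnP c N) => H.
  rewrite (bigD1 (Ordinal H)) //= eqxx /= big1 ?addn0 // => j Hj.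
  have -> : (nat_of_ord j == c) = false.
    apply/negbTE; apply: contraNN Hj => /eqP E; by apply/eqP/val_inj.
  by [].
rewrite big1 // => j _; have -> : (nat_of_ord j == c) = false.
  apply/negbTE/eqP => E; have := ltn_ord j; lia.
by [].
Qed.

Lemma sum_eq1 (T : finType) (t : T) (F : T -> nat) :
  (\sum_(x : T) (x == t) * F x = F t)%N.
Proof.
rewrite (bigD1 t) //= eqxx mul1n big1 ?addn0 // => x /negbTE ->; by rewrite mul0n.
Qed.

Section Tup3.
Variable n : nat.
Implicit Types g h : (n.*2).-tuple bool.

Lemma flip_inj g i j : valley g i -> valley g j -> flipT g i = flipT g j -> i = j.
Proof.
move=> Vi Vj E; have [A B] := nth_flipT Vi.
have Hi := valley_lt Vi.
move: A; rewrite E /= nth_flips ?size_tuple; last lia.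
case: (eqVneq i j) => // _; case: (i == j.+1) => //; by rewrite B.
Qed.

Lemma sum_covers g (F : (n.*2).-tuple bool -> nat) : g \in Dyck n ->
  (\sum_(g' : (n.*2).-tuple bool) covers g g' * F g' =
   \sum_(i < n.*2) valley g i * F (flipT g i))%N.
Proof.
move=> D.
transitivity (\sum_(i < n.*2) \sum_(g' : (n.*2).-tuple bool)
                 (valley g i && (g' == flipT g i)) * F g')%N; last first.
  apply: eq_bigr => i _; case: (valley g i) => /=; last by rewrite mul0n big1.
  by rewrite mul1n sum_eq1.
rewrite exchange_big; apply: eq_bigr => g' _.
rewrite -big_distrl /=; congr (_ * _)%N.
rewrite coversE D /=.
case: (boolP [exists i : 'I_(n.*2), valley g i && (g' == flipT g i)]).
  move=> /existsP [i0 /andP [V0 /eqP E0]].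
  rewrite (bigD1 i0) /= ?V0 ?E0 ?eqxx //= big1 // => j Hj.
  case: andP => // -[Vj /eqP Ej].
  case/negP: Hj; apply/eqP/val_inj => /=.
  by apply: (flip_inj Vj V0); rewrite -Ej.
move=> /existsPn H; rewrite big1 // => i _; by rewrite (negbTE (H i)).
Qed.

End Tup3.

Ltac nf := apply/negbTE/eqP; lia.

Lemma take3E (s : seq bool) i (a b c : bool) : (take 3 (drop i s) == [:: a; b; c]) =
  [&& (i.+2 < size s)%N, nth true s i == a, nth true s i.+1 == b & nth true s i.+2 == c].
Proof.
case: (ltnP i.+2 (size s)) => H.
  have H1 : (i < size s)%N by apply: ltn_trans H; apply: leq_trans (ltnSn _) _.
  have H2 : (i.+1 < size s)%N by apply: ltn_trans H.
  rewrite (drop_nth true H1) (drop_nth true H2) (drop_nth true H).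
  by rewrite /= take0 !eqseq_cons andbT.
rewrite /=; apply/negbTE/eqP => E; have := congr1 size E; rewrite size_take size_drop /=.
clear E; case: ifP; lia.
Qed.

Lemma valley_flips s i j : valley s i -> (j < size s)%N ->
  (valley (flips s i) j + (j == i) = valley s j + ((j.+1 == i) && ~~ nth true s j)
     + ((j == i.+1) && (i.+2 < size s) && nth true s i.+2))%N.
Proof.
rewrite !valleyE size_flips => /and3P[Hi Hn Hn1] Hj.
case: (ltnP j.+1 (size s)) => Hj1 /=.
  rewrite !nth_flips //.
  case: (eqVneq j i) => [->|Hji].
    have F1 : (i.+1 == i) = false by nf.
    have F2 : (i == i.+1) = false by nf.
    by rewrite eqxx F1 F2 Hn Hn1.
  case: (eqVneq j.+1 i) => [Ej|Hj1i].
    have F2 : (j == i.+1) = false by nf.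
    move: Hn; rewrite F2 -Ej => Hn; rewrite (negbTE Hn); by case: (nth true s j) => /=; rewrite ?addn0.
  case: (eqVneq j i.+1) => [Ej|Hji1].
    have F3 : (i.+2 == i.+1) = false by nf.
    have Hs : (i.+2 < size s)%N by rewrite -Ej.
    rewrite Ej F3 Hn1 Hs /=.
    by case: (nth true s i.+2).
  have F1 : (j.+1 == i.+1) = false by nf.
  by rewrite F1 /= !addn0.
have F1 : (j == i) = false by nf.
have F2 : (j.+1 == i) = false by nf.
rewrite F1 F2 /=.
case: (eqVneq j i.+1) => [Ej|] //=.
have F3 : (i.+2 < size s)%N = false by apply/negbTE; lia.
by rewrite F3.
Qed.

Definition ddu : seq bool := [:: false; false; true].

Lemma shift_sum N (h : nat -> nat) : h N.-1 = 0%N ->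
  (\sum_(i < N) (if (0 < i)%N then h i.-1 else 0%N) = \sum_(i < N) h i)%N.
Proof.
case: N => [|M] H; first by rewrite !big_ord0.
rewrite big_ord_recl big_ord_recr /= H addn0 add0n.
by apply: eq_bigr => j _.
Qed.

Section Tup4.
Variable n : nat.
Implicit Types g h : (n.*2).-tuple bool.

Lemma occ_tuple w g : occ w g = (\sum_(i < n.*2) (take (size w) (drop i g) == w))%N.
Proof. by rewrite /occ size_tuple. Qed.

Lemma occ_du_flip g i : valley g i ->
  (occ du (flipT g i) + 1 = occ du g + ((0 < i) && ~~ nth true g i.-1)
     + ((i.+2 < n.*2) && nth true g i.+2))%N.
Proof.
move=> V; have Hi := valley_lt V.
rewrite !occ_tuple.
transitivity (\sum_(j < n.*2) (valley (flipT g i) j + ((nat_of_ord j == i) && true)))%N.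
  rewrite big_split /= (sum_pick _ _ (fun _ => true)).
  by have -> : (i < n.*2)%N by clear -Hi; lia.
transitivity (\sum_(j < n.*2) (valley g j + ((nat_of_ord j == i.-1) && ((0 < i) && ~~ nth true g j)) +
   ((nat_of_ord j == i.+1) && ((i.+2 < n.*2) && nth true g i.+2))))%N.
  apply: eq_bigr => j _; rewrite andbT.
  have := valley_flips (j:=j) V; rewrite size_tuple => ->; last exact: ltn_ord.
  congr (_ + _ + _)%N; last by rewrite andbA.
  case: (posnP i) => [->|Hp] /=; first by rewrite andbF.
  congr (nat_of_bool (_ && _)); apply/eqP/eqP; lia.
rewrite !big_split /= (sum_pick _ i.-1 (fun j => (0 < i)%N && ~~ nth true g j)) (sum_pick _ i.+1 (fun _ => (i.+2 < n.*2)%N && nth true g i.+2)).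
have -> : (i.-1 < n.*2)%N by clear -Hi; lia.
have -> : (i.+1 < n.*2)%N by clear -Hi; lia.
by case: (posnP i) => [->|Hp] //=; rewrite -addnA.
Qed.

End Tup4.

Section Tup5.
Variable n : nat.
Implicit Types g h : (n.*2).-tuple bool.

Lemma occ_du_valley g : occ du g = (\sum_(i < n.*2) valley g i)%N.
Proof. by rewrite occ_tuple. Qed.

Lemma total_g g :
 (\sum_(i < n.*2) valley g i * occ du (flipT g i) + occ du g =
   occ du g * occ du g + occ ddu g + occ duu g)%N.
Proof.
rewrite {1}occ_du_valley -big_split /=.
transitivity (\sum_(i < n.*2) (valley g i * occ du g + valley g i * ((0 < i) && ~~ nth true g i.-1)
   + valley g i * ((i.+2 < n.*2) && nth true g i.+2)))%N.
  apply: eq_bigr => i _; case V: (valley g i); rewrite ?mul0n ?mul1n ?addn0 //.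
  by rewrite occ_du_flip.
rewrite !big_split /= -big_distrl /= -occ_du_valley -addnA -addnA; congr (_ + _)%N.
congr (_ + _)%N.
  rewrite occ_tuple /= -(shift_sum (h := fun j => nat_of_bool (take 3 (drop j g) == ddu))).
    apply: eq_bigr => i _; case: (posnP i) => [->|Hp] /=; first by rewrite muln0.
    have [j ->] : exists j, nat_of_ord i = j.+1 by exists i.-1; clear -Hp; lia.
    rewrite /= take3E valleyE size_tuple.
    by case: (nth true g j); case: (nth true g j.+1); case: (nth true g j.+2);
       rewrite /= ?andbT ?andbF ?muln0 ?muln1.
  rewrite /= take3E size_tuple.
  have -> : ((n.*2).-1.+2 < n.*2)%N = false by apply/negbTE; lia.
  by [].
rewrite occ_tuple; apply: eq_bigr => i _ /=.
rewrite take3E valleyE size_tuple.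
case: (ltnP i.+2 n.*2) => H /=; last by rewrite muln0.
have -> : (i.+1 < n.*2)%N by clear -H; lia.
by case: (nth true g i); case: (nth true g i.+1); case: (nth true g i.+2).
Qed.

End Tup5.

Lemma occ3_nat (s : seq bool) (a b c : bool) :
  occ [:: a; b; c] s = (\sum_(0 <= i < (size s).-2) (take 3 (drop i s) == [:: a; b; c]))%N.
Proof.
rewrite /occ /= -(big_mkord xpredT (fun i => nat_of_bool (take 3 (drop i s) == [:: a; b; c]))).
rewrite (big_cat_nat _ (n:=(size s).-2)) //=; last lia.
rewrite [X in (_ + X)%N]big1_seq ?addn0 // => i /andP[_]; rewrite mem_iota => /andP [H1 H2].
rewrite take3E; have -> : (i.+2 < size s)%N = false by apply/negbTE; lia.
by [].
Qed.

Lemma nth_rc (s : seq bool) k : (k < size s)%N ->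
  nth true (rev (map negb s)) k = ~~ nth true s (size s - k.+1).
Proof.
move=> H; rewrite nth_rev size_map // (nth_map true) //; lia.
Qed.

Lemma occ_rc (s : seq bool) (a b c : bool) :
  occ [:: a; b; c] (rev (map negb s)) = occ [:: ~~ c; ~~ b; ~~ a] s.
Proof.
rewrite !occ3_nat size_rev size_map big_nat_rev add0n.
apply: eq_big_nat => i /andP [_ Hi].
rewrite !take3E size_rev size_map.
set N := size s.
have -> : ((N.-2 - i.+1).+2 < N)%N by rewrite /N; lia.
have -> : (i.+2 < N)%N by rewrite /N; lia.
rewrite !nth_rc ?size_map; try (rewrite /N; lia).
have -> : (size s - (N.-2 - i.+1).+1 = i.+2)%N by rewrite /N; lia.
have -> : (size s - (N.-2 - i.+1).+2 = i.+1)%N by rewrite /N; lia.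
have -> : (size s - (N.-2 - i.+1).+3 = i)%N by rewrite /N; lia.
by case: (nth true s i); case: (nth true s i.+1); case: (nth true s i.+2);
   case: a; case: b; case: c.
Qed.

Lemma cd_rc (s : seq bool) k : (k <= size s)%N ->
  (cd (rev (map negb s)) k + count negb (drop (size s - k) s) = k)%N.
Proof.
move=> Hk; rewrite /cd take_rev size_map count_rev -map_drop count_map.
have Hc := count_predC negb (drop (size s - k) s); rewrite size_drop in Hc.
rewrite (_ : size s - (size s - k) = k)%N in Hc; last by clear -Hk; lia.
rewrite -[X in _ = X]Hc addnC; congr (_ + _)%N.
Qed.

Lemma cd_drop (s : seq bool) m : (cd s m + count negb (drop m s) = count negb s)%N.
Proof. by rewrite /cd -count_cat cat_take_drop. Qed.

Section Tup6.
Variable n : nat.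
Implicit Types g h : (n.*2).-tuple bool.

Definition rcT g : (n.*2).-tuple bool := [tuple of rev (map negb g)].

Lemma rcK : involutive rcT.
Proof.
move=> g; apply: val_inj => /=.
by rewrite map_rev revK (mapK negbK).
Qed.

Lemma rc_Dyck g : g \in Dyck n -> rcT g \in Dyck n.
Proof.
move=> /DyckP [H E]; apply/DyckP; split.
  move=> k Hk /=.
  have := cd_rc (s:=g) (k:=k); rewrite size_tuple => /(_ Hk) E1.
  have := cd_drop g (n.*2 - k); have := H (n.*2 - k)%N (leq_subr _ _).
  have Ec : count negb g = n by rewrite -cd_size size_tuple.
  clear -E1 Ec Hk; lia.
rewrite /=.
have := cd_rc (s:=g) (k:=n.*2); rewrite size_tuple => /(_ (leqnn _)) E1.
have := cd_drop g (n.*2 - n.*2); rewrite subnn cd0 add0n.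
have Ec : count negb g = n by rewrite -cd_size size_tuple.
rewrite subnn in E1; clear -E1 Ec; lia.
Qed.

Lemma sym_sum : (\sum_(g in Dyck n) occ ddu g = \sum_(g in Dyck n) occ duu g)%N.
Proof.
rewrite [RHS](reindex_inj (h:=rcT)); last exact: inv_inj rcK.
apply: eq_big => g.
  apply/idP/idP; first exact: rc_Dyck.
  by move=> D; rewrite -[g]rcK; exact: rc_Dyck.
by move=> _ /=; rewrite /duu occ_rc.
Qed.

End Tup6.

Section Final.
Variable n : nat.
Implicit Types g h : (n.*2).-tuple bool.

Lemma inner_sum g1 : (\sum_(g2 : (n.*2).-tuple bool) covers g1 g2 = (g1 \in Dyck n) * occ du g1)%N.
Proof.
case D: (g1 \in Dyck n).
  rewrite mul1n.
  transitivity (\sum_(g2 : (n.*2).-tuple bool) covers g1 g2 * 1)%N.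
    by apply: eq_bigr => ? _; rewrite muln1.
  rewrite sum_covers // occ_du_valley; apply: eq_bigr => i _; by rewrite muln1.
by rewrite mul0n big1 // => g2 _; rewrite coversE D.
Qed.

Lemma mid_sum g0 :
  (\sum_(g1 : (n.*2).-tuple bool) covers g0 g1 * ((g1 \in Dyck n) * occ du g1) =
   (g0 \in Dyck n) * \sum_(i < n.*2) valley g0 i * occ du (flipT g0 i))%N.
Proof.
case D: (g0 \in Dyck n).
  rewrite mul1n sum_covers //; apply: eq_bigr => i _.
  case V: (valley g0 i); last by rewrite !mul0n.
  by rewrite flip_Dyck // !mul1n.
by rewrite mul0n big1 // => g1 _; rewrite coversE D.
Qed.

Lemma sc2_sum : sc2 n =
  (\sum_(g0 : (n.*2).-tuple bool) \sum_(g1 : (n.*2).-tuple bool)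
     covers g0 g1 * \sum_(g2 : (n.*2).-tuple bool) covers g1 g2)%N.
Proof.
transitivity (\sum_(c : (n.*2).-tuple bool * (n.*2).-tuple bool * (n.*2).-tuple bool)
                 (covers c.1.1 c.1.2 && covers c.1.2 c.2))%N.
  rewrite /sc2 -sum1_card big_mkcond /=; apply: eq_bigr => c _; rewrite inE.
  by case: (_ && _).
symmetry.
transitivity (\sum_(g0 : (n.*2).-tuple bool) \sum_(g1 : (n.*2).-tuple bool)
     \sum_(g2 : (n.*2).-tuple bool) (covers g0 g1 && covers g1 g2))%N.
  apply: eq_bigr => g0 _; apply: eq_bigr => g1 _; rewrite big_distrr /=.
  by apply: eq_bigr => g2 _; rewrite mulnb.
rewrite pair_big /= pair_big /=.
by apply: eq_bigr.
Qed.

Lemma nat_identity : sc2 n =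
  (2 * \sum_(g in Dyck n) occ duu g + \sum_(g in Dyck n) (occ du g * (occ du g).-1))%N.
Proof.
set T := fun g => (\sum_(i < n.*2) valley g i * occ du (flipT g i))%N.
rewrite sc2_sum.
transitivity (\sum_(g0 : (n.*2).-tuple bool) (g0 \in Dyck n) * T g0)%N.
  apply: eq_bigr => g0 _; rewrite /T -mid_sum; apply: eq_bigr => g1 _; by rewrite inner_sum.
have -> : (\sum_(g0 : (n.*2).-tuple bool) (g0 \in Dyck n) * T g0 = \sum_(g0 in Dyck n) T g0)%N.
  rewrite [RHS]big_mkcond; apply: eq_bigr => g _; case: (g \in Dyck n); by rewrite /= ?mul1n ?mul0n.
have E1 : (\sum_(g in Dyck n) (T g + occ du g) =
   \sum_(g in Dyck n) (occ du g * occ du g + occ ddu g + occ duu g))%N.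
  by apply: eq_bigr => g _; rewrite /T total_g.
rewrite !big_split /= sym_sum in E1.
have E3 : (\sum_(g in Dyck n) (occ du g * occ du g) =
   \sum_(g in Dyck n) (occ du g * (occ du g).-1) + \sum_(g in Dyck n) occ du g)%N.
  rewrite -big_split; apply: eq_bigr => g _ /=.
  by case: (occ du g) => [|k] //=; rewrite mulnSr.
rewrite E3 in E1.
rewrite /T /= in E1 *; lia.
Qed.
End Final.

Unset Implicit Arguments.

Lemma deriv_sumT (I : finType) (P : pred I) (F : I -> {poly int}) :
  (\sum_(i | P i) F i)^`() = \sum_(i | P i) (F i)^`().
Proof. exact: raddf_sum. Qed.

Theorem mainTheorem3 (n : nat) :
  (sc2 n)%:Z = 2 * (Fcoef n)^`().[1] + (Vcoef n)^`(2).[1].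
Proof.
have H1 : (Fcoef n)^`().[1] = ((\sum_(g in Dyck n) occ duu g)%N)%:R.
  rewrite /Fcoef deriv_sumT horner_sum natr_sum; apply: eq_bigr => g _.
  by rewrite derivXn hornerMn hornerXn expr1n.
have H2 : (Vcoef n)^`(2).[1] = ((\sum_(g in Dyck n) (occ du g * (occ du g).-1))%N)%:R.
  rewrite /Vcoef (_ : forall p : {poly int}, p^`(2) = p^`()^`()) //.
  rewrite !deriv_sumT horner_sum natr_sum; apply: eq_bigr => g _.
  rewrite derivXn derivMn derivXn hornerMn hornerMn hornerXn expr1n -mulrnA.
  by rewrite mulnC.
rewrite H1 H2 nat_identity !natz PoszD PoszM.
by [].
Qed.
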